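(* For all $n\ge1$, in $\mathcal Z^{\mathfrak f}$: $\zeta^{\mathfrak f}((x_0x_1)^nx_0)=-2\sum_{i=0}^{n-1}\zeta^{\mathfrak f}(\{2\}^i,3,\{2\}^{n-1-i})=2\sum_{i=1}^n(-1)^i\zeta^{\mathfrak f}(2i+1)\,\zeta^{\mathfrak f}(\{2\}^{n-i})$.
   Context: Formal MZVs: $\mathcal X=\{x_0,x_1\}$, $\mathbb Q\langle\mathcal X\rangle$ free noncommutative polynomials, $ш$ shuffle product ($\mathbf1шw=wш\mathbf1=w$, $auшbv=a(uшbv)+b(auшv)$). $\mathcal Z^{\mathfrak f}=(\mathbb Q\langle\mathcal X\rangle,ш)/R$, $R$ the ideal generated by $x_0,x_1$ and $uш v-\iota(\iota^{-1}(u)*\iota^{-1}(v))$ for $u\in\mathbb Q\mathbf1+x_0\mathbb Q\langle\mathcal X\rangle x_1$, $v\in\mathbb Q\mathbf1+\mathbb Q\langle\mathcal X\rangle x_1$, with $\iota(y_{k_1}\cdots y_{k_d})=x_0^{k_1-1}x_1\cdots x_0^{k_d-1}x_1$ and $*$ the stuffle product on $\mathbb Q\langle y_1,y_2,\dots\rangle$ ($y_iu*y_jv=y_i(u*y_jv)+y_j(y_iu*v)+y_{i+j}(u*v)$). $\zeta^{\mathfrak f}(w)$ is the class of the word $w$, $\zeta^{\mathfrak f}(k_1,\dots,k_d)=\zeta^{\mathfrak f}(x_0^{k_1-1}x_1\cdots x_0^{k_d-1}x_1)$, $\{2\}^m$ denotes $m$ entries equal to $2$, $\zeta^{\mathfrak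 f}(\{2\}^0)=1$. *)

(* Defs.v *)
From mathcomp Require Import all_boot all_algebra.
Set Implicit Arguments. Unset Strict Implicit. Unset Printing Implicit Defensive.
Import GRing.Theory.
Local Open Scope ring_scope.

Definition word := seq bool.
Definition x0 : bool := false.
Definition x1 : bool := true.

(* Elements of Q<X> are represented by (unnormalized) finite formal sums
   of words with rational coefficients; two representations denote the
   same polynomial iff they have the same coefficient function. *)
Definition poly := seq (rat * word).
Definition coef (p : poly) (w : word) : rat := \sum_(t <- p | t.2 == w) t.1.
Definition peq (p q : poly) : Prop := forall w, coef p w = coef q w.
Definition padd (p q : poly) : poly := p ++ q.
Definition pscale (c : rat) (p : poly) : poly := [seq (c * t.1, t.2) | t <- p].
Definition pword (w : word) : poly := [:: (1, w)].
Definition psum (ps : seq poly) : poly := flatten ps.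

(* Shuffle of words (as a list of words, with multiplicity):
   1 ш w = w ш 1 = w, au ш bv = a(u ш bv) + b(au ш v). *)
Fixpoint shw {T : Type} (u v : seq T) : seq (seq T) :=
  match u with
  | [::] => [:: v]
  | a :: u' =>
    (fix shv (v : seq T) : seq (seq T) :=
       match v with
       | [::] => [:: u]
       | b :: v' => map (cons a) (shw u' v) ++ map (cons b) (shv v')
       end) v
  end.

Definition psh (p q : poly) : poly :=
  flatten [seq [seq (t.1 * s.1, w) | w <- shw t.2 s.2] | t <- p, s <- q].

(* Stuffle on words over Y = {y1, y2, ...}; the letter y_k is encoded as k. *)
Fixpoint stw (u v : seq nat) : seq (seq nat) :=
  match u with
  | [::] => [:: v]
  | i :: u' =>
    (fix stv (v : seq nat) : seq (seq nat) :=
       match v with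
       | [::] => [:: u]
       | j :: v' => map (cons i) (stw u' v) ++ map (cons j) (stv v')
                    ++ map (cons (i + j)%N) (stw u' v')
       end) v
  end.

Definition iotaX (s : seq nat) : word :=
  flatten [seq nseq k.-1 x0 ++ [:: x1] | k <- s].

(* inverse of iotaX on words in {1} u X* x1 *)
Fixpoint iotainv_aux (c : nat) (w : word) : seq nat :=
  match w with
  | [::] => [::]
  | b :: w' => if b then c.+1 :: iotainv_aux 0 w' else iotainv_aux c.+1 w'
  end.
Definition iotainv (w : word) : seq nat := iotainv_aux 0 w.

Definition pstuffle (p q : poly) : poly :=
  flatten [seq [seq (t.1 * s.1, iotaX z) | z <- stw (iotainv t.2) (iotainv s.2)]
          | t <- p, s <- q].

Definition adm0 (p : poly) : Prop :=
  forall w, coef p w != 0 -> (w == [::]) || ((head x1 w == x0) && (last x0 w == x1)).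
Definition adm1 (p : poly) : Prop :=
  forall w, coef p w != 0 -> (w == [::]) || (last x0 w == x1).

Definition isGen (g : poly) : Prop :=
  g = pword [:: x0] \/ g = pword [:: x1] \/
  exists u v, adm0 u /\ adm1 v /\ g = padd (psh u v) (pscale (-1) (pstuffle u v)).

Definition inR (p : poly) : Prop :=
  exists s : seq (poly * poly),
    (forall t, t \in s -> isGen t.2) /\
    peq p (flatten [seq psh t.1 t.2 | t <- s]).

(* equality of classes in Z^f = (Q<X>, ш)/R *)
Definition zeq (p q : poly) : Prop := inR (padd p (pscale (-1) q)).

Definition zetaf (ks : seq nat) : poly := pword (iotaX ks).

(* Main.v *)
Require Import Defs.
From mathcomp Require Import all_boot all_algebra.
From mathcomp Require Import zify.
Set Warnings "-notation-overridden -ambiguous-paths".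

Lemma iotaX_cons k s : iotaX (k :: s) = nseq k.-1 x0 ++ x1 :: iotaX s.
Proof. by rewrite /iotaX /= -catA. Qed.

Lemma iotaX_cat s t : iotaX (s ++ t) = iotaX s ++ iotaX t.
Proof. by rewrite /iotaX map_cat flatten_cat. Qed.

Lemma iotaX_nseq2 n : iotaX (nseq n 2) = flatten (nseq n [:: x0; x1]).
Proof. by elim: n => //= n <-; rewrite iotaX_cons. Qed.

Lemma iotainv_aux_nseq c k w : iotainv_aux c (nseq k false ++ w) = iotainv_aux (c + k) w.
Proof. by elim: k c => [|k IH] c /=; rewrite ?addn0 // IH addnS. Qed.

Lemma iotainvK s : all (fun k => 0 < k) s -> iotainv (iotaX s) = s.
Proof.
rewrite /iotainv; elim: s => //= k s IH /andP[hk hs].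
rewrite iotaX_cons iotainv_aux_nseq /= add0n prednK // IH //.
Qed.

Lemma last_iotaX s b : s != [::] -> last b (iotaX s) = true.
Proof.
elim: s b => // k s IH b _; rewrite iotaX_cons last_cat /=.
by case: s IH => // k' s' IH; apply: IH.
Qed.

Lemma stw1_cons k j v :
  stw [:: k] (j :: v) = [:: k :: j :: v] ++ map (cons j) (stw [:: k] v) ++ [:: (k + j) :: v].
Proof. by []. Qed.

Lemma shw_cons1 (a b : bool) u : shw (a :: u) [:: b] = map (cons a) (shw u [:: b]) ++ [:: [:: b, a & u]].
Proof. by []. Qed.

Lemma map_iotaS {T : Type} (F : nat -> T) m :
  map F (iota 0 m.+1) = F 0%N :: map (fun a => F a.+1) (iota 0 m).
Proof.
have := iotaDl 1 0 m; rewrite addn0 /= => ->.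
by rewrite -map_comp.
Qed.

Lemma stw_perm k m :
  perm_eq (stw [:: k] (nseq m 2))
    ([seq nseq a 2 ++ k :: nseq (m - a) 2 | a <- iota 0 m.+1] ++
     [seq nseq a 2 ++ (k + 2) :: nseq (m.-1 - a) 2 | a <- iota 0 m]).
Proof.
elim: m => [|m IH]; first by [].
rewrite [nseq _ _]/= stw1_cons.
set S := stw [:: k] (nseq m 2).
have EA : [seq nseq a 2 ++ k :: nseq (m.+1 - a) 2 | a <- iota 0 m.+2] =
   (k :: nseq m.+1 2) :: map (cons 2) [seq nseq a 2 ++ k :: nseq (m - a) 2 | a <- iota 0 m.+1].
  by rewrite map_iotaS -map_comp; congr (_ :: _); apply: eq_map => a /=; rewrite subSS.
have EB : [seq nseq a 2 ++ (k + 2) :: nseq (m.+1.-1 - a) 2 | a <- iota 0 m.+1] =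
   ((k + 2) :: nseq m 2) :: map (cons 2) [seq nseq a 2 ++ (k + 2) :: nseq (m.-1 - a) 2 | a <- iota 0 m].
  rewrite map_iotaS -map_comp /= subn0; congr (_ :: _); apply: eq_map => a /=.
  by rewrite subnS -subn1 subnAC subn1.
rewrite EA EB.
have IH' := perm_map (cons 2) IH.
rewrite map_cat in IH'.
apply/permP => p; move/permP: IH' => /(_ p).
rewrite /= !count_cat /= => ->; lia.
Qed.

Definition Pw n : word := flatten (nseq n [:: x0; x1]).
Definition zs n : seq word := [seq iotaX (nseq i 2 ++ 3 :: nseq (n.-1 - i) 2) | i <- iota 0 n].

Lemma shw_perm n : perm_eq (shw (Pw n) [:: x0]) ((Pw n ++ [:: x0]) :: zs n ++ zs n).
Proof.
elim: n => [|n IH]; first by [].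
have EP : Pw n.+1 = x0 :: x1 :: Pw n by [].
have EZ : zs n.+1 = (x0 :: x0 :: x1 :: Pw n) :: map (fun w => x0 :: x1 :: w) (zs n).
  rewrite /zs map_iotaS -map_comp /= iotaX_cons /= iotaX_nseq2 subn0; congr (_ :: _).
  apply: eq_map => a /=; rewrite iotaX_cons /=.
  by rewrite subnS -subn1 subnAC subn1.
rewrite EP EZ !shw_cons1.
set S := shw (Pw n) [:: x0].
have IH' := perm_map (fun w => x0 :: x1 :: w) IH.
apply/permP => p; move/permP: IH' => /(_ p).
rewrite /= !map_cat !count_cat /= !count_map => ->; lia.
Qed.


Import GRing.Theory.
From mathcomp Require Import ring.
Local Open Scope ring_scope.

Lemma coef_nil w : coef [::] w = 0.
Proof. by rewrite /coef big_nil. Qed.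

Lemma coef_cons c v p w : coef ((c, v) :: p) w = (if v == w then c else 0) + coef p w.
Proof. by rewrite /coef big_cons /=; case: (v == w); rewrite ?add0r. Qed.

Lemma coef_cat p q w : coef (p ++ q) w = coef p w + coef q w.
Proof. by rewrite /coef big_cat. Qed.

Lemma coef_scale c p w : coef (pscale c p) w = c * coef p w.
Proof.
elim: p => [|[a v] p IH]; first by rewrite /= !coef_nil mulr0.
by rewrite /= !coef_cons IH mulrDr; case: (v == w); rewrite ?mulr0.
Qed.

Lemma coef_psum ps w : coef (psum ps) w = \sum_(p <- ps) coef p w.
Proof.
elim: ps => [|p ps IH]; first by rewrite big_nil coef_nil.
by rewrite big_cons /psum /= coef_cat -IH.
Qed.

Lemma coef_map {T : Type} (c : rat) (f : T -> word) (s : seq T) w :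
  coef [seq (c, f x) | x <- s] w = c * (count (fun x => f x == w) s)%:R.
Proof.
elim: s => [|x s IH]; first by rewrite coef_nil mulr0.
rewrite /= coef_cons IH /= natrD mulrDr.
by case: (f x == w); rewrite ?mulr1 ?mulr0.
Qed.

Lemma psh_word c a d b : psh [:: (c, a)] [:: (d, b)] = [seq (c * d, w) | w <- shw a b].
Proof. by rewrite /psh /= cats0. Qed.

Lemma pstuffle_word c a d b :
  pstuffle [:: (c, a)] [:: (d, b)] =
  [seq (c * d, iotaX z) | z <- stw (iotainv a) (iotainv b)].
Proof. by rewrite /pstuffle /= cats0. Qed.

Lemma psh_unit c g w : coef (psh [:: (c, [::])] g) w = c * coef g w.
Proof.
rewrite /psh /= cats0. elim: g => [|[d v] g IH]; first by rewrite /= coef_nil mulr0.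
rewrite /= !coef_cons IH mulrDr.
by case: (v == w); rewrite ?mulr0.
Qed.

Lemma psum_words {T : Type} (f : T -> word) s :
  psum [seq pword (f x) | x <- s] = [seq (1, f x) | x <- s].
Proof. by elim: s => //= x s <-. Qed.

Lemma psh_unit' c g w : coef (psh (pscale c (pword [::])) g) w = c * coef g w.
Proof. by rewrite /pscale /pword /= psh_unit mulr1. Qed.

Lemma telescope (c : nat -> rat) m :
  \sum_(i <- iota 1 m) (-1) ^+ i * (c i + c i.+1) = - c 1%N + (-1) ^+ m * c m.+1.
Proof.
elim: m => [|m IH]; first by rewrite big_nil expr0 mul1r addNr.
have -> : iota 1 m.+1 = iota 1 m ++ [:: m.+1] by have := iotaD 1 m 1; rewrite addn1 add1n.
rewrite big_cat /= big_seq1 IH exprS; ring.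
Qed.

Definition Tk n k := [seq nseq a 2 ++ k.*2.+1 :: nseq (n - k - a) 2 | a <- iota 0 (n.+1 - k)]%N.

Lemma stcount n i (P : pred (seq nat)) : (i <= n)%N ->
  count P (stw [:: i.*2.+1] (nseq (n - i) 2)) = (count P (Tk n i) + count P (Tk n i.+1))%N.
Proof.
move=> hi; rewrite (permP (stw_perm _ _)) count_cat /Tk; congr (_ + _)%N.
  by rewrite subSn.
rewrite subSS addn2 -doubleS; congr (count P _); apply: eq_map => a.
by rewrite subnS.
Qed.

Lemma all_nseq2 m : all (fun k => 0 < k)%N (nseq m 2%N).
Proof. by elim: m. Qed.

Lemma coef_st n i w : (i <= n)%N ->
  coef (pstuffle (zetaf [:: i.*2.+1]) (zetaf (nseq (n - i) 2))) w =
  (count (fun z => iotaX z == w) (Tk n i))%:R + (count (fun z => iotaX z == w) (Tk n i.+1))%:R.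
Proof.
move=> hi; rewrite /zetaf /pword pstuffle_word coef_map iotainvK // iotainvK ?all_nseq2 //.
by rewrite mul1r mul1r stcount // natrD.
Qed.

Theorem mainTheorem11 (n : nat) (hn : (1 <= n)%N) :
  zeq (pword (flatten (nseq n [:: x0; x1]) ++ [:: x0]))
      (pscale (-2) (psum [seq zetaf (nseq i 2%N ++ 3%N :: nseq (n.-1 - i) 2%N)
                         | i <- iota 0 n]))
  /\
  zeq (pscale (-2) (psum [seq zetaf (nseq i 2%N ++ 3%N :: nseq (n.-1 - i) 2%N)
                         | i <- iota 0 n]))
      (pscale 2 (psum [seq pscale ((-1) ^+ i)
                             (psh (zetaf [:: i.*2.+1]) (zetaf (nseq (n - i) 2%N)))
                      | i <- iota 1 n])).
Proof.
split.
- exists [:: (pword (Pw n), pword [:: x0])]; split.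
    by move=> t; rewrite inE => /eqP -> /=; left.
  move=> w; rewrite /= cats0 /pword psh_word coef_map (permP (shw_perm n)).
  rewrite coef_cons !coef_scale /zetaf psum_words coef_map.
  rewrite /= count_cat /zs count_map /Pw.
  set k := count _ (iota 0 n).
  rewrite !natrD; case: (_ == w) => /=; ring.
pose u i := zetaf [:: i.*2.+1].
pose v i := zetaf (nseq (n - i) 2).
pose g i := padd (psh (u i) (v i)) (pscale (-1) (pstuffle (u i) (v i))).
exists [seq (pscale (-2 * (-1) ^+ i) (pword [::]), g i) | i <- iota 1 n]; split.
  move=> t /mapP [i]; rewrite mem_iota => /andP [hi1 hi2] -> /=.
  right; right; exists (u i), (v i); split; last split; last by [].
    move=> w; rewrite /u /zetaf /pword coef_cons coef_nil addr0.
    case: (iotaX _ =P w) => [<- _|_]; last by rewrite eqxx.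
    rewrite last_iotaX // andbT.
    by case: i hi1 {hi2}.
  move=> w; rewrite /v /zetaf /pword coef_cons coef_nil addr0.
  case: (iotaX _ =P w) => [<- _|_]; last by rewrite eqxx.
  case: (n - i)%N => [|m] //.
  by rewrite last_iotaX.
move=> w.
set c := fun k => (count (fun z => iotaX z == w) (Tk n k))%:R : rat.
rewrite -map_comp -[flatten _]/(psum _) coef_psum big_map big_seq.
rewrite (eq_bigr (fun i => -2 * (-1) ^+ i * (coef (psh (u i) (v i)) w + -1 * (c i + c i.+1)))); last first.
  move=> i Hi; rewrite /= psh_unit' /g /padd coef_cat coef_scale /u /v coef_st //.
  by move: Hi; rewrite mem_iota; lia.
rewrite -big_seq.
rewrite (eq_bigr (fun i => -2 * ((-1) ^+ i * coef (psh (u i) (v i)) w) + 2 * ((-1) ^+ i * (c i + c i.+1)))); last by move=> i _; ring.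
rewrite big_split /= -!mulr_sumr telescope.
have c0 : c n.+1 = 0 by rewrite /c /Tk subnn.
have cZ : (count (fun x => iotaX (nseq x 2%N ++ 3%N :: nseq (n.-1 - x) 2%N) == w) (iota 0 n))%:R = c 1%N.
  by rewrite /c /Tk count_map subSS subn0 subn1.
rewrite c0 mulr0 addr0 /padd coef_cat !coef_scale /zetaf psum_words coef_map coef_psum big_map.
under eq_bigr => i _ do rewrite coef_scale.
rewrite cZ /u /v /zetaf; ring.
Qed.
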